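(* For every integer $n\ge 2$, \[ \left\lfloor\frac{n+2\left\lfloor\frac{n-3}{7}\right\rfloor}{3}\right\rfloor\le S_d(n)\le \left\lfloor\frac{n}{2}\right\rfloor . \]
   Context: A word is a finite word over the two-letter alphabet $\{a,b\}$; words are written multiplicatively (e.g. $b^{3}(ab)^2$), and $l(w)$ denotes the length of $w$. A word $w=a_1\cdots a_n$ is a palindrome if $a_i=a_{n-i+1}$ for all $i\le n$, and an antipalindrome if $a_i\neq a_{n-i+1}$ for all $i\le n$. For a word $w$, $S_d(w)$ is the minimal number of letters of $w$ whose deletion from $w$ yields a palindrome or an antipalindrome. For a positive integer $n$, $S_d(n)=\max\{S_d(w): w \text{ a word with } l(w)=n\}$. Here $\lfloor x\rfloor$ denotes the integer part (floor) of $x$. *)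

(* Defs.v *)
From mathcomp Require Import all_boot.
Set Implicit Arguments. Unset Strict Implicit. Unset Printing Implicit Defensive.

(* Words over {a,b} encoded as bitseq: a = false, b = true. *)
Definition palindrome (w : bitseq) : bool := rev w == w.
Definition antipalindrome (w : bitseq) : bool := rev w == map negb w.

Definition Sd_word (w : bitseq) : nat :=
  \big[minn/size w]_(m : (size w).-tuple bool
        | palindrome (mask m w) || antipalindrome (mask m w))
     (size w - size (mask m w)).

Definition Sd (n : nat) : nat :=
  \max_(w : n.-tuple bool) Sd_word w.

(* Main.v *)
Require Import Defs.
From mathcomp Require Import all_boot zify.
Set Implicit Arguments. Unset Strict Implicit. Unset Printing Implicit Defensive.


Definition prm := (nat * nat * nat * nat * nat)%type.
Definition bh (P : prm) : prm := let: (p,q,t,e,r) := P in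
  match p with p'.+1 => (p',q,t,e,r) | 0 =>
  match q with q'.+1 => (0,q',t,e,r) | 0 =>
  match t with t'.+1 => (0,1,t',e,r) | 0 =>
  match e with e'.+1 => (0,0,0,e',r) | 0 => (0,0,0,0,r.-1) end end end end.
Definition bl (P : prm) : prm := let: (p,q,t,e,r) := P in
  match r with r'.+1 => (p,q,t,e,r') | 0 =>
  match e with e'.+1 => (p,q,t,e',0) | 0 =>
  match t with t'.+1 => (p,q,t',1,0) | 0 =>
  match q with q'.+1 => (p,q',0,0,0) | 0 => (p.-1,0,0,0,0) end end end end.
Definition fl (P : prm) : bool := let: (p,q,t,e,r) := P in
  match p with _.+1 => false | 0 =>
  match q with _.+1 => true | 0 =>
  match t with _.+1 => false | 0 =>
  match e with _.+1 => false | 0 => true end end end end.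
Definition ll (P : prm) : bool := let: (p,q,t,e,r) := P in
  match r with _.+1 => true | 0 =>
  match e with _.+1 => false | 0 =>
  match t with _.+1 => true | 0 =>
  match q with _.+1 => true | 0 => false end end end end.
Definition sz (P : prm) : nat := let: (p,q,t,e,r) := P in p+q+2*t+e+r.
Definition wd (P : prm) : bitseq := let: (p,q,t,e,r) := P in
  nseq p false ++ nseq q true ++ flatten (nseq t [:: false; true]) ++ nseq e false ++ nseq r true.

Lemma nseqSr (T : Type) n (x : T) : nseq n.+1 x = rcons (nseq n x) x.
Proof. by elim: n => //= n IH; rewrite -IH. Qed.
Lemma flatSr (T : Type) n (s : seq T) : flatten (nseq n.+1 s) = flatten (nseq n s) ++ s.
Proof. by rewrite nseqSr -cats1 flatten_cat /= cats0. Qed.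

Lemma size_wd P : size (wd P) = sz P.
Proof.
case: P => [[[[p q] t] e] r] /=; rewrite !size_cat !size_nseq size_flatten.
suff -> : sumn (shape (nseq t [:: false; true])) = 2 * t by rewrite !addnA.
by elim: t => // t IH; rewrite /= IH mulnS.
Qed.

Lemma wd_bh P : 0 < sz P -> wd P = fl P :: wd (bh P).
Proof.
case: P => [[[[p q] t] e] r].
by case: p => [|p]; case: q => [|q]; case: t => [|t]; case: e => [|e]; case: r => [|r] => /=.
Qed.

Lemma wdr p q t e r : wd (p,q,t,e,r.+1) = rcons (wd (p,q,t,e,r)) true.
Proof. by rewrite /wd nseqSr -!cats1 -!catA. Qed.
Lemma wde p q t e : wd (p,q,t,e.+1,0) = rcons (wd (p,q,t,e,0)) false.
Proof. by rewrite /wd nseqSr -!cats1 -!catA. Qed.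
Lemma wdt p q t : wd (p,q,t.+1,0,0) = rcons (wd (p,q,t,1,0)) true.
Proof. by rewrite /wd flatSr -!cats1 -!catA. Qed.
Lemma wdq p q : wd (p,q.+1,0,0,0) = rcons (wd (p,q,0,0,0)) true.
Proof. by rewrite /wd nseqSr -!cats1 -!catA. Qed.
Lemma wdp p : wd (p.+1,0,0,0,0) = rcons (wd (p,0,0,0,0)) false.
Proof. by rewrite /wd nseqSr -!cats1 -!catA. Qed.

Lemma wd_bl P : 0 < sz P -> wd P = rcons (wd (bl P)) (ll P).
Proof.
case: P => [[[[p q] t] e] r].
case: r => [|r] H; first last. by rewrite wdr.
case: e H => [|e] H; first last. by rewrite wde.
case: t H => [|t] H; first last. by rewrite wdt.
case: q H => [|q] H; first last. by rewrite wdq.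
case: p H => [|p] H //. by rewrite wdp.
Qed.


Definition Fp (P : prm) : nat :=
  let: (p,q,t,e,r) := P in
  maxn (maxn (q+t+r) (p+t+e))
   (maxn (if (0 < p) && (0 < t+e) then minn (q+t+e+p) (q+2*t+2*e) else 0)
     (maxn (if e == 0 then minn (2*t+2*q-1) (2*t+2*r+1) else 2*t+1)
           (if [&& e == 1, 0 < p & 0 < q] then 2*t+3 else 0))).
Definition Gp (P : prm) : nat :=
  let: (p,q,t,e,r) := P in
  maxn (maxn (minn (2*t+2*p) (2*t+2*r)) (minn (2*p) (2*q+2*t+2*r)))
   (maxn (2*t) (maxn (if (0 < p) && (0 < q) then minn (2*t+2*p) (2*t+2+2*r) else 0)
                     (if e == 1 then minn (2*t+2*q) (2*t+2) else 0))).
Definition inv (P : prm) : Prop := let: (p,q,t,e,r) := P in e <= 1 /\ (e = 0 \/ r = 0).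

Ltac sol := match goal with
 | |- is_true (_ || _) => apply/orP; first [left; sol | right; sol]
 | |- is_true (_ && _) => apply/andP; split; sol
 | _ => first [done | lia] end.
Ltac fin := intros; try discriminate; rewrite /Fp /Gp /=; repeat (case: ifP => ?); rewrite ?geq_max; repeat (apply/andP; split); rewrite ?leq_max ?geq_min ?leq_min; sol.

Lemma inv_bh P : inv P -> inv (bh P).
Proof. case: P => [[[[p q] t] e] r]; case: p => [|p]; case: q => [|q]; case: t => [|t]; case: e => [|e] /=; lia. Qed.
Lemma inv_bl P : inv P -> inv (bl P).
Proof. case: P => [[[[p q] t] e] r]; case: r => [|r]; case: e => [|e]; case: t => [|t]; case: q => [|q] /=; lia. Qed.

Lemma F_bh P : inv P -> 0 < sz P -> Fp (bh P) <= Fp P.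
Proof. case: P => [[[[p q] t] e] r]; case: p => [|p]; case: q => [|q]; case: t => [|t]; case: e => [|e]; case: r => [|r] => /= ; fin. Qed.
Lemma F_bl P : inv P -> 0 < sz P -> Fp (bl P) <= Fp P.
Proof. case: P => [[[[p q] t] e] r]; case: p => [|p]; case: q => [|q]; case: t => [|t]; case: e => [|e]; case: r => [|r] => /= ; fin. Qed.
Lemma F_1 P : inv P -> 0 < sz P -> 1 <= Fp P.
Proof. case: P => [[[[p q] t] e] r]; case: p => [|p]; case: q => [|q]; case: t => [|t]; case: e => [|e]; case: r => [|r] => /= ; fin. Qed.
Lemma G_bh P : inv P -> 0 < sz P -> Gp (bh P) <= Gp P.
Proof. case: P => [[[[p q] t] e] r]; case: p => [|p]; case: q => [|q]; case: t => [|t]; case: e => [|e]; case: r => [|r] => /= ; fin. Qed.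
Lemma G_bl P : inv P -> 0 < sz P -> Gp (bl P) <= Gp P.
Proof. case: P => [[[[p q] t] e] r]; case: p => [|p]; case: q => [|q]; case: t => [|t]; case: e => [|e]; case: r => [|r] => /= ; fin. Qed.

Lemma F_inner P : inv P -> 2 <= sz P -> fl P = ll P -> 2 + Fp (bl (bh P)) <= Fp P.
Proof.
case: P => [[[[p q] t] e] r].
case: p => [|[|p]]; case: q => [|[|q]]; case: t => [|[|t]]; case: e => [|[|e]];
  case: r => [|[|r]] => /= ; fin.
Qed.
Lemma G_inner P : inv P -> 2 <= sz P -> fl P = ~~ ll P -> 2 + Gp (bl (bh P)) <= Gp P.
Proof.
case: P => [[[[p q] t] e] r].
case: p => [|[|p]]; case: q => [|[|q]]; case: t => [|[|t]]; case: e => [|[|e]];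
  case: r => [|[|r]] => /= ; fin.
Qed.


Lemma step (x y : bool) mid u : subseq u (x :: rcons mid y) ->
  [\/ subseq u (rcons mid y), subseq u (x :: mid) |
      exists v, u = x :: rcons v y /\ subseq v mid].
Proof.
case: u => [|z u]; first by move=> _; apply: Or31; rewrite sub0seq.
rewrite /=; case: eqP => [->{z}|ne] H; last by apply: Or31.
case/lastP: u H => [|v y'] H; first by apply: Or32; rewrite /= ?eqxx ?sub0seq.
move: H; rewrite -subseq_rev !rev_rcons /=; case: eqP => [->{y'}|ne] H.
  by apply: Or33; exists v; rewrite subseq_rev in H.
apply: Or32; rewrite /= ?eqxx -subseq_rev rev_rcons /=.
exact: H.
Qed.

Lemma wd_nil P : sz P = 0 -> wd P = [::].
Proof. by move=> H; apply/size0nil; rewrite size_wd. Qed.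

Lemma bound (pr : bitseq -> bool) (rel : bool -> bool -> bool) (F : prm -> nat)
 (Hpr : forall x y v, pr (x :: rcons v y) -> pr v /\ rel x y)
 (Hbh : forall P, inv P -> 0 < sz P -> F (bh P) <= F P)
 (Hbl : forall P, inv P -> 0 < sz P -> F (bl P) <= F P)
 (H1 : forall P x, inv P -> 0 < sz P -> pr [:: x] -> 1 <= F P)
 (Hin : forall P, inv P -> 2 <= sz P -> rel (fl P) (ll P) -> 2 + F (bl (bh P)) <= F P) :
 forall N P u, inv P -> sz P <= N -> subseq u (wd P) -> pr u -> size u <= F P.
Proof.
elim=> [|N IH] P u iP sP su pu.
  by move: su; rewrite wd_nil ?subseq0; [move/eqP -> | lia].
have [s0|s1] := posnP (sz P).
  by move: su; rewrite wd_nil ?subseq0 // => /eqP ->.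
have eh := wd_bh s1.
have sh : sz (bh P) = (sz P).-1 by rewrite -!size_wd eh.
have [s2|s2] := leqP (sz P) 1.
  have e1 : wd P = [:: fl P] by rewrite eh wd_nil //; lia.
  move: su; rewrite e1; case: u pu => [|z [|z' u]] pu su //.
    exact: (H1 P z).
  by have := size_subseq su.
have eb := wd_bl s1.
have ehl : wd (bh P) = rcons (wd (bl (bh P))) (ll (bh P)) by apply: wd_bl; lia.
rewrite ehl in eh.
have := eh; rewrite eb -rcons_cons => /rcons_inj [e2 e3].
rewrite eh -e3 in su.
have ibh := inv_bh iP; have ibl := inv_bl iP.
case/step: su => [su|su|[v [eu sv]]]; try subst u.
- apply: leq_trans (Hbh P iP s1); apply: (IH _ u ibh) => //; last by rewrite ehl -e3.
  lia.
- apply: leq_trans (Hbl P iP s1); apply: (IH _ u ibl) => //; last by rewrite e2.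
  have : size (wd P) = (size (wd (bl P))).+1 by rewrite eb size_rcons.
  rewrite !size_wd; lia.
- case: (Hpr _ _ _ pu) => pv rv.
  have := Hin P iP s2 rv; rewrite /= size_rcons.
  have : size v <= F (bl (bh P)).
    apply: (IH _ v (inv_bl ibh)) => //.
    have : size (wd (bh P)) = (size (wd (bl (bh P)))).+1 by rewrite ehl size_rcons.
    rewrite !size_wd; lia.
  lia.
Qed.


Lemma pal_inner x y v : palindrome (x :: rcons v y) -> palindrome v /\ (x == y).
Proof.
rewrite /palindrome rev_cons rev_rcons rcons_cons => /eqP [e1 e2].
have [e3 e4] := rcons_inj e2. by rewrite e3 e1 !eqxx.
Qed.
Lemma anti_inner x y v : antipalindrome (x :: rcons v y) -> antipalindrome v /\ (x == ~~ y).
Proof.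
rewrite /antipalindrome rev_cons rev_rcons /= map_rcons => /eqP [e1 e2].
have [e3 e4] := rcons_inj e2. rewrite e3 -e4. by rewrite !eqxx.
Qed.

Lemma pa_bound P u : inv P -> subseq u (wd P) -> palindrome u || antipalindrome u ->
  size u <= maxn (Fp P) (Gp P).
Proof.
move=> iP su /orP [pu|au].
  apply: leq_trans (leq_maxl _ _).
  apply: (@bound palindrome (fun x y => x == y) Fp _ _ _ _ _ (sz P)) => //.
  - exact: pal_inner.
  - exact: F_bh.
  - exact: F_bl.
  - move=> Q x iQ sQ _; exact: F_1.
  - by move=> Q iQ sQ /eqP; apply: F_inner.
apply: leq_trans (leq_maxr _ _).
apply: (@bound antipalindrome (fun x y => x == ~~ y) Gp _ _ _ _ _ (sz P)) => //.
- exact: anti_inner.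
- exact: G_bh.
- exact: G_bl.
- by move=> Q x iQ sQ; rewrite /antipalindrome /=; case: x.
- by move=> Q iQ sQ /eqP; apply: G_inner.
Qed.

Lemma Sdw_lower (w : bitseq) k : k <= size w ->
  (forall u, subseq u w -> palindrome u || antipalindrome u -> size u <= size w - k) ->
  k <= Sd_word w.
Proof.
move=> kw H; rewrite /Sd_word; apply: (big_ind (fun x => k <= x)) => //.
  by move=> x y; rewrite leq_min => -> ->.
move=> m pm; have := H _ (mask_subseq m w) pm.
have := size_subseq (mask_subseq m w) => h1 h2.
by rewrite leq_subRL // addnC -leq_subRL.
Qed.

Lemma bigmin_le (I : eqType) (s : seq I) (Pr : pred I) (F : I -> nat) idx j :
  j \in s -> Pr j -> \big[minn/idx]_(i <- s | Pr i) F i <= F j.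
Proof.
elim: s => // i s IH; rewrite inE big_cons => /orP [/eqP <- | js] pj.
  by rewrite pj geq_minl.
case: ifP => _; last exact: IH.
by apply: leq_trans (geq_minr _ _) _; exact: IH.
Qed.

Lemma Sdw_upper (w : bitseq) : Sd_word w <= size w %/ 2.
Proof.
set c := count_mem false w <= count_mem true w.
pose m := map_tuple (pred1 c) (in_tuple w).
have hc : count_mem true w + count_mem false w = size w.
  rewrite -(count_predC (pred1 true) w); congr (_ + _).
  by apply: eq_count => x; case: x.
have mm : mask m w = filter (pred1 c) w by rewrite filter_mask.
have pm : palindrome (mask m w) || antipalindrome (mask m w).
  apply/orP; left; rewrite mm /palindrome.
  by move/all_pred1P: (filter_all (pred1 c) w) => ->; rewrite rev_nseq.
have := @bigmin_le _ (index_enum _) (fun m0 : (size w).-tuple bool => palindrome (mask m0 w) || antipalindrome (mask m0 w)) (fun m0 => size w - size (mask m0 w)) (size w) m (mem_index_enum m) pm.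
rewrite /Sd_word => /leq_trans; apply.
rewrite mm size_filter.
rewrite /c; case: (leqP (count_mem false w) (count_mem true w)) => H /=; rewrite -{1}hc ?addKn ?addnK; rewrite -hc; lia.
Qed.


Theorem theorem1 (n : nat) (hn : 2 <= n) :
  (n + 2 * ((n - 3) %/ 7)) %/ 3 <= Sd n <= n %/ 2.
Proof.
apply/andP; split; last first.
  rewrite /Sd; apply: (big_ind (fun x => x <= n %/ 2)) => //.
    by move=> x y; rewrite geq_max => -> ->.
  by move=> w _; have := Sdw_upper w; rewrite size_tuple.
have [n2|n3] := leqP n 2.
  by have -> : n = 2 by lia.
set m := (n - 3) %/ 7.
have hm : 7 * m <= n - 3 < 7 * m + 7 by rewrite /m; lia.
set T := (n + 2 * m) %/ 3.
have hT : 3 * T <= n + 2 * m < 3 * T + 3 by rewrite /T; lia.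
clearbody m T.
pose P : prm := (T - m, n - T - 2 * m, m, 0, m).
have sw : size (wd P) == n by rewrite size_wd /P /=; apply/eqP; lia.
apply: leq_trans (leq_bigmax (Tuple sw)).
rewrite /=; apply: Sdw_lower.
  rewrite (eqP sw); lia.
have iP : inv P by rewrite /P /=; lia.
move=> u su pu; have := pa_bound iP su pu.
have F1 : m + 1 <= T - m by lia.
have F2 : 2*m+2 <= n - T - 2*m by lia.
have F3 : 2*(T-m) <= n - T - 2*m + 2*m by lia.
have e : n - T = (n - T - 2*m) + 2*m by lia.
rewrite (eqP sw) /P /Fp /Gp /= => H; apply: leq_trans H _.
rewrite e; move: (T - m) (n - T - 2*m) F1 F2 F3 => p q F1 F2 F3.
clear -F1 F2 F3.
rewrite !geq_max; repeat (case: ifP => ?); rewrite /= ?leq0n ?andbT; lia.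
Qed.
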